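(* Let $\mu>\operatorname{cf}(\mu)=\kappa$ be a singular cardinal and let $\lambda$ be a regular cardinal with $\mu<\lambda\le 2^\mu$. Let $\mathcal{S}$ be a nice system for $\mu$, consisting of $(\mu_i:i<\kappa)$, $(\lambda_i:i<\kappa)$, $(\mathscr{D}_i:i<\kappa)$, $(W_i:i<\kappa)$, $(g_i:i<\kappa)$. Assume: (1) $\mathscr{D}$ is a uniform ultrafilter over $\kappa$ which is generated by at most $\lambda$ many sets; (2) $\bar f=(f_\alpha:\alpha<\lambda)$ is a sullam in $(\prod_{i<\kappa}W_i,\mathscr{D})$; (3) $\operatorname{cf}(\prod_{i<\kappa}\mathscr{D}_i,\supseteq)=\lambda$. Then there exists a uniform ultrafilter $\mathscr{U}$ over $\mu$ with $\operatorname{Ch}(\mathscr{U})\le\lambda$.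
   Context: A filter over a cardinal $\theta$ is uniform if all its members have cardinality $\theta$; all filters $\mathscr{D}$ over a regular $\theta$ considered here are uniform and contain $\{\theta-u:u\in[\theta]^{<\theta}\}$. For $A,B\subseteq\theta$, $A\subseteq^* B$ means $|A-B|<\theta$. A base for a uniform filter $\mathcal{F}$ over $\theta$ is a subfamily $\mathcal{A}\subseteq\mathcal{F}$ such that every $B\in\mathcal{F}$ has some $A\in\mathcal{A}$ with $A\subseteq^*B$; $\operatorname{Ch}(\mathcal{F})$ is the minimal size of a base. For a filter $\mathscr{D}$ over $\theta$: $I(\mathscr{D})=\{A\subseteq\theta:\theta-A\in\mathscr{D}\}$, $\mathscr{D}^+=\mathcal{P}(\theta)-I(\mathscr{D})$, and $A\subseteq_{\mathscr{D}}B$ iff $A-B\in I(\mathscr{D})$. A quasi order $(W,\le_W)$ is a reflexive transitive relation; $V\subseteq W$ is dense if for every $x\in W$ there is $y\in V$ with $x\le_W y$. For a quasi order $W$ and a filter $\mathscr{D}$ over $\theta$, a function $g:W\to\mathscr{D}^+$ is $\subseteq_{\mathscr{D}}$-decreasing if $s\le_W t$ implies $g(t)\subseteq_{\mathscr{D}}g(s)$, and $g$ has the decidability property if for every $s\in W$ and every $A\subseteq\theta$ there is $t\in W$ with $s\le_W t$ and ($g(t)\subseteq_{\mathscr{D}}A$ or $g(t)\subseteq_{\mathscr{D}}\theta-A$). Nice system for singular $\mu$ with $\operatorname{cf}(\mu)=\kappa$: an increasing sequence of cardinals $(\mu_i:i<\kappa)$ with $\mu=\bigcup_i\mu_i$;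 an increasing sequence of regular cardinals $(\lambda_i:i<\kappa)$ with $\mu_i\le\lambda_i<\mu_{i+1}$; filters $\mathscr{D}_i$ over $\lambda_i$; quasi orders $W_i$; and functions $g_i:W_i\to\mathscr{D}_i^+$ each $\subseteq_{\mathscr{D}_i}$-decreasing with the decidability property. Sullam: for a regular $\kappa$, an ultrafilter (or filter) $\mathscr{D}$ over $\kappa$ containing all co-bounded sets, and quasi orders $W_i$, a sequence $(f_\alpha:\alpha<\lambda)$ with $f_\alpha\in\prod_{i<\kappa}W_i$ is a sullam in $(\prod_{i<\kappa}W_i,\mathscr{D})$ if (a) for $\alpha<\beta$, $\{i:f_\alpha(i)\le_{W_i}f_\beta(i)\}\in\mathscr{D}$, and (b) whenever $V_i\subseteq W_i$ is dense for each $i$, there is $\alpha<\lambda$ with $\{i:f_\alpha(i)\in V_i\}\in\mathscr{D}$. $\operatorname{cf}(\prod_{i<\kappa}\mathscr{D}_i,\supseteq)$ is the minimal size of a family $\mathcal{F}\subseteq\prod_{i<\kappa}\mathscr{D}_i$ such that for every $\langle B_i:i<\kappa\rangle\in\prod_i\mathscr{D}_i$ there is $\langle A_i:i<\kappa\rangle\in\mathcal{F}$ with $\{i:A_i\subseteq B_i\}\in\mathscr{D}$. *)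

(* Defs.v *)
(* Cardinals are represented as well-ordered types whose
   proper initial segments all have strictly smaller cardinality
   (i.e. initial ordinals); cardinality comparison is via injections. *)
From Stdlib Require Import List.



Definition set (T : Type) := T -> Prop.
Definition subset {T} (A B : set T) : Prop := forall x, A x -> B x.
Definition compl {T} (A : set T) : set T := fun x => ~ A x.
Definition setD {T} (A B : set T) : set T := fun x => A x /\ ~ B x.
Definition elts {T} (A : set T) : Type := {x : T | A x}.

Definition card_le (A B : Type) : Prop :=
  exists f : A -> B, forall x y, f x = f y -> x = y.
Definition card_lt (A B : Type) : Prop := card_le A B /\ ~ card_le B A.

Definition is_wo {T} (lt : T -> T -> Prop) : Prop :=
  well_founded lt /\
  (forall x y z, lt x y -> lt y z -> lt x z) /\
  (forall x y, lt x y \/ x = y \/ lt y x).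

Definition is_card {T} (lt : T -> T -> Prop) : Prop :=
  is_wo lt /\ forall x : T, card_lt {y : T | lt y x} T.

Definition seg {T} (lt : T -> T -> Prop) (m : T) : Type := {x : T | lt x m}.
Definition seg_lt {T} (lt : T -> T -> Prop) (m : T) : seg lt m -> seg lt m -> Prop :=
  fun a b => lt (proj1_sig a) (proj1_sig b).

Definition cofinal {T I} (lt : T -> T -> Prop) (f : I -> T) : Prop :=
  forall x : T, exists i : I, lt x (f i) \/ x = f i.

Definition cf_is {T} (lt : T -> T -> Prop) (K : Type) : Prop :=
  (exists f : K -> T, cofinal lt f) /\
  (forall (I : Type) (f : I -> T), card_lt I K -> ~ cofinal lt f).

Definition regular {T} (lt : T -> T -> Prop) : Prop :=
  is_card lt /\ card_le nat T /\ cf_is lt T.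

Definition is_filter {T} (F : set (set T)) : Prop :=
  F (fun _ => True) /\
  (forall A B, F A -> subset A B -> F B) /\
  (forall A B, F A -> F B -> F (fun x => A x /\ B x)).

Definition is_ultrafilter {T} (F : set (set T)) : Prop :=
  is_filter F /\ ~ F (fun _ => False) /\ (forall A, F A \/ F (compl A)).

Definition uniform {T} (F : set (set T)) : Prop :=
  forall A, F A -> card_le T (elts A).

Definition contains_cosmall {T} (F : set (set T)) : Prop :=
  forall u : set T, card_lt (elts u) T -> F (compl u).

Definition ideal_of {T} (F : set (set T)) : set (set T) := fun A => F (compl A).
Definition positive {T} (F : set (set T)) : set (set T) := fun A => ~ ideal_of F A.
Definition subD {T} (F : set (set T)) (A B : set T) : Prop := ideal_of F (setD A B).

Definition generated_by {T I} (F : set (set T)) (G : I -> set T) : Prop :=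
  (forall a, F (G a)) /\
  (forall A, F A -> exists l : list I, subset (fun x => forall a, In a l -> G a x) A).

Definition quasi_order {W} (le : W -> W -> Prop) : Prop :=
  (forall x, le x x) /\ (forall x y z, le x y -> le y z -> le x z).
Definition dense {W} (le : W -> W -> Prop) (V : set W) : Prop :=
  forall x, exists y, V y /\ le x y.

Definition good_map {W T} (le : W -> W -> Prop) (D : set (set T)) (g : W -> set T) : Prop :=
  (forall s, positive D (g s)) /\
  (forall s t, le s t -> subD D (g t) (g s)) /\
  (forall s (A : set T), exists t, le s t /\ (subD D (g t) A \/ subD D (g t) (compl A))).

Definition sullam {K L} (W : K -> Type) (leW : forall i, W i -> W i -> Prop)
  (D : set (set K)) (ltL : L -> L -> Prop) (f : L -> forall i, W i) : Prop :=
  (forall a b, ltL a b -> D (fun i => leW i (f a i) (f b i))) /\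
  (forall V : forall i, set (W i), (forall i, dense (leW i) (V i)) ->
     exists a, D (fun i => V i (f a i))).

Definition prod_cofinal {K I : Type} (X : K -> Type) (Ds : forall i, set (set (X i)))
  (D : set (set K)) (F : I -> forall i, set (X i)) : Prop :=
  (forall a i, Ds i (F a i)) /\
  (forall B : forall i, set (X i), (forall i, Ds i (B i)) ->
     exists a, D (fun i => subset (F a i) (B i))).

Definition prod_cf_is {K} (X : K -> Type) (Ds : forall i, set (set (X i)))
  (D : set (set K)) (L : Type) : Prop :=
  (exists F : L -> forall i, set (X i), prod_cofinal X Ds D F) /\
  (forall (I : Type) (F : I -> forall i, set (X i)), card_lt I L -> ~ prod_cofinal X Ds D F).

(* Ch(U) <= |L| : U has a base (mod ⊆^* ) indexed by L *)
Definition Ch_le {T} (U : set (set T)) (L : Type) : Prop :=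
  exists A : L -> set T, (forall a, U (A a)) /\
    (forall B, U B -> exists a, card_lt (elts (setD (A a) B)) T).

Definition is_succ {K} (lt : K -> K -> Prop) (i j : K) : Prop :=
  lt i j /\ forall k, lt i k -> k = j \/ lt j k.

(* Main.v *)
Require Import Defs.
From Stdlib Require Import List FinFun Classical ClassicalEpsilon ProofIrrelevance FunctionalExtensionality Lia Wellfounded.

Lemma cle_refl A : card_le A A.
Proof. exists (fun x => x); auto. Qed.

Lemma cle_trans A B C : card_le A B -> card_le B C -> card_le A C.
Proof. intros [f Hf] [g Hg]; exists (fun x => g (f x)); auto. Qed.

Lemma cle_prod A B C D : card_le A B -> card_le C D -> card_le (A * C) (B * D).
Proof.
  intros [f Hf] [g Hg]; exists (fun p => (f (fst p), g (snd p))).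
  intros [a c] [a' c'] H; simpl in H; inversion H; f_equal; auto.
Qed.

Lemma sig_eq {T} (P : T -> Prop) (x y : {t | P t}) : proj1_sig x = proj1_sig y -> x = y.
Proof. destruct x, y; simpl; intros ->; f_equal; apply proof_irrelevance. Qed.

Definition covered (X : Type) := exists l : list X, forall x, In x l.

Lemma cov_not_nat X : covered X -> ~ card_le nat X.
Proof.
  intros [l Hl] [e He].
  assert (H := NoDup_incl_length (l:=map e (seq 0 (S (length l)))) (l':=l)).
  rewrite length_map, length_seq in H.
  assert (S (length l) <= length l); [|lia].
  apply H. apply Injective_map_NoDup; [exact He| apply seq_NoDup].
  intros x _; apply Hl.
Qed.

Lemma not_nat_cov X : ~ card_le nat X -> covered X.
Proof.
  intros Hn; apply NNPP; intros Hc.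
  assert (Hx : forall l : list X, exists x, ~ In x l).
  { intros l; apply NNPP; intros H; apply Hc; exists l; intros x.
    apply NNPP; intros H'; apply H; exists x; auto. }
  set (nxt := fun l => proj1_sig (constructive_indefinite_description _ (Hx l))).
  assert (Hnxt : forall l, ~ In (nxt l) l).
  { intros l; unfold nxt; destruct constructive_indefinite_description; auto. }
  set (s := fix s n := match n with 0 => nil | S n => nxt (s n) :: s n end).
  assert (Hin : forall m n, m < n -> In (nxt (s m)) (s n)).
  { intros m n; induction n; intros H; [lia|].
    simpl. destruct (PeanoNat.Nat.eq_dec m n); [subst; left; auto| right; apply IHn; lia]. }
  apply Hn; exists (fun n => nxt (s n)); intros m n E.
  destruct (PeanoNat.Nat.lt_total m n) as [H|[H|H]]; auto.
  - exfalso; apply (Hnxt (s n)); rewrite <- E; apply Hin; auto.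
  - exfalso; apply (Hnxt (s m)); rewrite E; apply Hin; auto.
Qed.

Lemma cov_option X : covered X -> covered (option X).
Proof.
  intros [l Hl]; exists (None :: map Some l); intros [x|]; simpl; auto.
  right; apply in_map; auto.
Qed.

Lemma cov_prod X Y : covered X -> covered Y -> covered (X * Y).
Proof.
  intros [l Hl] [l' Hl']; exists (list_prod l l'); intros [x y]; apply in_prod; auto.
Qed.

Lemma not_nat_inj X Y : card_le X Y -> ~ card_le nat Y -> ~ card_le nat X.
Proof. intros H1 H2 H3; apply H2; eapply cle_trans; eauto. Qed.

Lemma opt_inj X : card_le nat X -> card_le (option X) X.
Proof.
  intros [e He].
  set (h := fun o : option X => match o with
    | None => e 0
    | Some x => match excluded_middle_informative (exists n, x = e n) with
       | left H => e (S (proj1_sig (constructive_indefinite_description _ H)))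
       | right _ => x end end).
  exists h; intros [x|] [y|]; unfold h;
  repeat match goal with |- context [excluded_middle_informative ?P] =>
    destruct (excluded_middle_informative P) end;
  repeat match goal with |- context [constructive_indefinite_description ?P ?H] =>
    destruct (constructive_indefinite_description P H) end; simpl; intros E;
  try (subst; reflexivity);
  try (apply He in E; first [discriminate | injection E; intros; subst; congruence]);
  exfalso;
  match goal with
  | n : ~ (exists k, ?z = e k) |- _ => apply n; eexists; eauto; fail
  end.
Qed.

Lemma emb {P Q : Type} (ltP : P -> P -> Prop) (wf : well_founded ltP)
  (tot : forall p q, ltP p q \/ p = q \/ ltP q p)
  (H : forall p, ~ card_le Q {q | ltP q p}) : card_le P Q.
Proof.
  assert (ex : forall p (rec : forall q, ltP q p -> Q), exists t, forall q Hq, rec q Hq <> t).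
  { intros p rec; apply NNPP; intros Hn.
    assert (Hc : forall t, exists qq : {q | ltP q p}, rec (proj1_sig qq) (proj2_sig qq) = t).
    { intros t; apply NNPP; intros H1; apply Hn; exists t; intros q Hq E; apply H1;
      exists (exist _ q Hq); auto. }
    apply (H p).
    exists (fun t => proj1_sig (constructive_indefinite_description _ (Hc t))).
    intros t t' E.
    destruct (constructive_indefinite_description _ (Hc t)) as [qq Hqq].
    destruct (constructive_indefinite_description _ (Hc t')) as [qq' Hqq'].
    simpl in E; subst; auto. }
  set (step := fun p rec => proj1_sig (constructive_indefinite_description _ (ex p rec))).
  set (h := Fix wf (fun _ => Q) step).
  assert (Heq : forall p, h p = step p (fun q _ => h q)).
  { intros p; unfold h; apply (Fix_eq wf (fun _ => Q) step). intros x f g Hfg.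
    assert (f = g) by (apply functional_extensionality_dep; intros q;
      apply functional_extensionality_dep; intros; apply Hfg).
    subst; auto. }
  assert (Hsp : forall p q, ltP q p -> h q <> h p).
  { intros p q Hq; rewrite (Heq p); unfold step.
    destruct constructive_indefinite_description as [t Ht]; simpl.
    apply (Ht q Hq). }
  exists h; intros p q E.
  destruct (tot p q) as [X|[X|X]]; auto.
  - exfalso; apply (Hsp q p X E).
  - exfalso; apply (Hsp p q X); auto.
Qed.

Lemma wf_min {T} (R : T -> T -> Prop) (wf : well_founded R) (P : T -> Prop) y :
  P y -> exists c, P c /\ forall z, R z c -> ~ P z.
Proof.
  intros Py; apply NNPP; intros Hn.
  assert (forall y, ~ P y) as HH; [|exact (HH y Py)].
  intros y'; induction y' as [y' IH] using (well_founded_ind wf); intros Py'.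
  apply Hn; exists y'; split; auto.
Qed.

Definition lee {T} (lt : T -> T -> Prop) a b := lt a b \/ a = b.

Lemma hess T (lt : T -> T -> Prop) (Hwo : is_wo lt) (Hnat : card_le nat T)
  (Hc : forall x, ~ card_le T (seg lt x))
  (IH : forall x, card_le nat (seg lt x) -> card_le (seg lt x * seg lt x) (seg lt x)) :
  card_le (T * T) T.
Proof.
  destruct Hwo as [wf [tr tot]].
  assert (letr : forall a b c, lee lt a b -> lee lt b c -> lee lt a c).
  { intros a b c [H1|H1] [H2|H2]; subst; unfold lee; eauto. }
  set (mx := fun a b => if excluded_middle_informative (lt a b) then b else a).
  assert (mx1 : forall a b, lee lt a (mx a b)).
  { intros a b; unfold mx; destruct excluded_middle_informative; unfold lee; auto. }
  assert (mx2 : forall a b, lee lt b (mx a b)).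
  { intros a b; unfold mx; destruct excluded_middle_informative; unfold lee; auto.
    destruct (tot a b) as [X|[X|X]]; [tauto| right; auto| left; auto]. }
  set (m := fun p : T * T => mx (fst p) (snd p)).
  set (G := fun p q : T * T => lt (m p) (m q) \/ (m p = m q /\
     (lt (fst p) (fst q) \/ (fst p = fst q /\ lt (snd p) (snd q))))).
  assert (wfG : well_founded G).
  { assert (HH : forall mm p, m p = mm -> Acc G p).
    { intros mm; induction mm as [mm IHm] using (well_founded_ind wf).
      intros [a b]; revert b; induction a as [a IHa] using (well_founded_ind wf).
      intros b; induction b as [b IHb] using (well_founded_ind wf).
      intros Em; constructor; intros [c d] Hg.
      destruct Hg as [H1|[H1 [H2|[H2 H3]]]]; simpl in *.
      - apply (IHm (m (c, d))); [rewrite <- Em; exact H1| reflexivity].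
      - apply IHa; auto. rewrite H1; auto.
      - subst c; apply IHb; auto. rewrite H1; auto. }
    intros p; apply (HH (m p)); auto. }
  assert (totG : forall p q, G p q \/ p = q \/ G q p).
  { intros p q; unfold G.
    destruct (tot (m p) (m q)) as [X|[X|X]]; [left; left; auto| |right; right; left; auto].
    destruct (tot (fst p) (fst q)) as [Y|[Y|Y]];
      [left; right; auto| |right; right; right; auto].
    destruct (tot (snd p) (snd q)) as [Z|[Z|Z]];
      [left; right; auto| |right; right; right; auto].
    right; left; destruct p, q; simpl in *; subst; auto. }
  apply (emb G wfG totG).
  intros p Hle.
  set (mm := m p).
  assert (b1 : forall qq : {q | G q p}, lee lt (fst (proj1_sig qq)) mm).
  { intros [q Hq]; simpl. apply letr with (m q); [apply mx1|].
    destruct Hq as [X|[X _]]; unfold lee; auto. }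
  assert (b2 : forall qq : {q | G q p}, lee lt (snd (proj1_sig qq)) mm).
  { intros [q Hq]; simpl. apply letr with (m q); [apply mx2|].
    destruct Hq as [X|[X _]]; unfold lee; auto. }
  assert (H1 : card_le {q | G q p} ({z | lee lt z mm} * {z | lee lt z mm})).
  { exists (fun qq => (exist (fun z => lee lt z mm) _ (b1 qq), exist (fun z => lee lt z mm) _ (b2 qq))).
    intros [[a b] Hq] [[c d] Hq'] E; simpl in E. inversion E; subst.
    apply sig_eq; reflexivity. }
  assert (H2 : card_le {z | lee lt z mm} (option (seg lt mm))).
  { exists (fun z => match excluded_middle_informative (lt (proj1_sig z) mm) with
       | left H => Some (exist _ (proj1_sig z) H) | right _ => None end).
    intros [z Hz] [w Hw]; simpl.
    destruct excluded_middle_informative; destruct excluded_middle_informative;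
      intros E; try discriminate.
    - inversion E; apply sig_eq; auto.
    - apply sig_eq; simpl. destruct Hz; destruct Hw; subst; tauto. }
  assert (HT := cle_trans _ _ _ Hle H1).
  destruct (classic (card_le nat (seg lt mm))) as [Hn|Hn].
  - apply (Hc mm). eapply cle_trans; [exact HT|].
    eapply cle_trans; [apply cle_prod; (eapply cle_trans; [exact H2| apply opt_inj; exact Hn])|].
    apply IH; auto.
  - apply (cov_not_nat ({z | lee lt z mm} * {z | lee lt z mm})).
    + assert (C : covered {z | lee lt z mm}).
      { apply not_nat_cov. eapply not_nat_inj; [exact H2|].
        apply cov_not_nat, cov_option, not_nat_cov; auto. }
      apply cov_prod; auto.
    + eapply cle_trans; eauto.
Qed.

Lemma seg_incl T (lt : T -> T -> Prop) (tr : forall x y z, lt x y -> lt y z -> lt x z) a b :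
  lt a b -> card_le (seg lt a) (seg lt b).
Proof.
  intros H; exists (fun y => exist _ (proj1_sig y) (tr _ _ _ (proj2_sig y) H)).
  intros x y E; apply sig_eq; inversion E; auto.
Qed.

Lemma hall T (lt : T -> T -> Prop) (Hwo : is_wo lt) :
  forall x, card_le nat (seg lt x) -> card_le (seg lt x * seg lt x) (seg lt x).
Proof.
  destruct Hwo as [wf [tr tot]].
  intros x; induction x as [x IHx] using (well_founded_ind wf); intros Hn.
  destruct (wf_min lt wf (fun y => card_le (seg lt x) (seg lt y)) x (cle_refl _))
    as [c [Pc Mc]].
  destruct (tot c x) as [X|[X|X]].
  - assert (Hc : card_le nat (seg lt c)) by (eapply cle_trans; eauto).
    eapply cle_trans; [apply cle_prod; exact Pc|].
    eapply cle_trans; [apply IHx; auto|]. apply seg_incl; auto.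
  - subst c.
    apply (hess _ (seg_lt lt x)).
    + split; [|split].
      * apply (wf_inverse_image _ _ lt (fun a => proj1_sig a)); auto.
      * intros a b c; unfold seg_lt; eauto.
      * intros a b; unfold seg_lt; destruct (tot (proj1_sig a) (proj1_sig b)) as [Y|[Y|Y]];
        auto. right; left; apply sig_eq; auto.
    + auto.
    + intros z Hz. apply (Mc (proj1_sig z) (proj2_sig z)).
      eapply cle_trans; [exact Hz|].
      exists (fun w => exist (fun y => lt y (proj1_sig z)) (proj1_sig (proj1_sig w)) (proj2_sig w)).
      intros a b E; inversion E; apply sig_eq, sig_eq; auto.
    + intros z Hz.
      assert (r1 : card_le (seg (seg_lt lt x) z) (seg lt (proj1_sig z))).
      { exists (fun w => exist (fun y => lt y (proj1_sig z)) (proj1_sig (proj1_sig w)) (proj2_sig w)).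
        intros a b E; inversion E; apply sig_eq, sig_eq; auto. }
      assert (r2 : card_le (seg lt (proj1_sig z)) (seg (seg_lt lt x) z)).
      { exists (fun y => exist (fun w => seg_lt lt x w z)
          (exist (fun u => lt u x) (proj1_sig y) (tr _ _ _ (proj2_sig y) (proj2_sig z)))
          (proj2_sig y)).
        intros a b E; inversion E; apply sig_eq; auto. }
      eapply cle_trans; [apply cle_prod; exact r1|].
      eapply cle_trans; [apply IHx; [exact (proj2_sig z)| eapply cle_trans; eauto]|].
      exact r2.
  - exfalso; apply (Mc x X); apply cle_refl.
Qed.

Lemma card_sq T (lt : T -> T -> Prop) : is_card lt -> card_le nat T -> card_le (T * T) T.
Proof.
  intros [Hwo Hc] Hn. apply (hess T lt Hwo Hn).
  - intros x; exact (proj2 (Hc x)).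
  - apply hall; auto.
Qed.

Lemma list_inj T : card_le (T * T) T -> card_le nat T -> card_le (list T) T.
Proof.
  intros [p Hp] Hn; destruct (opt_inj T Hn) as [o Ho].
  set (enc := fix enc (l : list T) := match l with
     | nil => o None | a :: l => o (Some (p (a, enc l))) end).
  exists enc; intros l; induction l as [|a l IHl]; intros [|b l'] E; simpl in E; auto.
  - apply Ho in E; discriminate.
  - apply Ho in E; discriminate.
  - apply Ho in E; injection E; intros E'; apply Hp in E'; injection E'; intros E1 E2.
    subst; f_equal; apply IHl; auto.
Qed.

Lemma filt_up {T} (F : set (set T)) : is_filter F ->
  forall A B, F A -> (forall x, A x -> B x) -> F B.
Proof. intros [_ [H _]] A B HA HB; apply (H A B HA HB). Qed.

Lemma filt_and {T} (F : set (set T)) : is_filter F ->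
  forall A B, F A -> F B -> F (fun x => A x /\ B x).
Proof. intros [_ [_ H]]; auto. Qed.

Lemma filt_T {T} (F : set (set T)) : is_filter F -> forall A, (forall x, A x) -> F A.
Proof. intros HF A HA; apply (filt_up F HF (fun _ => True)); auto. apply HF. Qed.

Lemma subD_mono {T} (F : set (set T)) X A B : is_filter F ->
  subD F X A -> (forall x, A x -> B x) -> subD F X B.
Proof.
  intros HF H HAB; unfold subD, ideal_of in *; apply (filt_up F HF _ _ H).
  intros x Hx [H1 H2]; apply Hx; split; auto.
Qed.

Lemma subD_trans {T} (F : set (set T)) X Y Z : is_filter F ->
  subD F X Y -> subD F Y Z -> subD F X Z.
Proof.
  intros HF H1 H2; unfold subD, ideal_of in *.
  apply (filt_up F HF _ _ (filt_and F HF _ _ H1 H2)).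
  intros x [A1 A2] [B1 B2]; apply A2; split; auto.
  apply NNPP; intros C; apply A1; split; auto.
Qed.

Lemma subD_and {T} (F : set (set T)) X A B : is_filter F ->
  subD F X A -> subD F X B -> subD F X (fun x => A x /\ B x).
Proof.
  intros HF H1 H2; unfold subD, ideal_of in *.
  apply (filt_up F HF _ _ (filt_and F HF _ _ H1 H2)).
  intros x [A1 A2] [B1 B2]; apply B2; split.
  - apply NNPP; intros C; apply A1; split; auto.
  - apply NNPP; intros C; apply A2; split; auto.
Qed.

Lemma pos_not_empty {T} (F : set (set T)) X : is_filter F -> positive F X ->
  ~ subD F X (fun _ => False).
Proof.
  intros HF HP H; apply HP; unfold subD, ideal_of in *.
  apply (filt_up F HF _ _ H). intros x Hx HX; apply Hx; split; auto.
Qed.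

Lemma pos_big {T} (F : set (set T)) X A : is_filter F -> contains_cosmall F -> positive F X ->
  subD F X A -> ~ card_lt (elts A) T.
Proof.
  intros HF Hc HP H Hl; apply HP; unfold subD, ideal_of in *.
  apply (filt_up F HF _ _ (filt_and F HF _ _ H (Hc A Hl))).
  intros x [H1 H2] HX; apply H1; split; auto.
Qed.

Theorem theorem2p4
  (* mu, kappa = cf(mu), lambda: cardinals as initial well-orders *)
  (M : Type) (ltM : M -> M -> Prop)
  (K : Type) (ltK : K -> K -> Prop)
  (L : Type) (ltL : L -> L -> Prop)
  (* mu is a singular cardinal with cf(mu) = kappa < mu *)
  (HM : is_card ltM) (HMinf : card_le nat M)
  (HK : is_card ltK) (HcfM : cf_is ltM K) (HKM : card_lt K M)
  (* lambda regular, mu < lambda <= 2^mu *)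
  (HL : regular ltL) (HML : card_lt M L) (HL2 : card_le L (M -> Prop))
  (* nice system *)
  (mu_ lam_ : K -> M)
  (Hmu_card : forall i, is_card (seg_lt ltM (mu_ i)))
  (Hmu_incr : forall i j, ltK i j -> ltM (mu_ i) (mu_ j))
  (Hmu_union : forall x : M, exists i, ltM x (mu_ i))
  (Hlam_reg : forall i, regular (seg_lt ltM (lam_ i)))
  (Hlam_incr : forall i j, ltK i j -> ltM (lam_ i) (lam_ j))
  (Hmu_lam : forall i, ltM (mu_ i) (lam_ i) \/ mu_ i = lam_ i)
  (Hlam_mu : forall i j, is_succ ltK i j -> ltM (lam_ i) (mu_ j))
  (Ds : forall i, set (set (seg ltM (lam_ i))))
  (HDs_filter : forall i, is_filter (Ds i))
  (HDs_unif : forall i, uniform (Ds i))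
  (HDs_cosmall : forall i, contains_cosmall (Ds i))
  (W : K -> Type) (leW : forall i, W i -> W i -> Prop)
  (HW : forall i, quasi_order (leW i))
  (g : forall i, W i -> set (seg ltM (lam_ i)))
  (Hg : forall i, good_map (leW i) (Ds i) (g i))
  (* (1) D uniform ultrafilter over kappa generated by at most lambda sets *)
  (D : set (set K))
  (HD_ultra : is_ultrafilter D) (HD_unif : uniform D)
  (HD_gen : exists G : L -> set K, generated_by D G)
  (* (2) a sullam of length lambda *)
  (f : L -> forall i, W i)
  (Hf : sullam W leW D ltL f)
  (* (3) cf(prod D_i, superset) = lambda *)
  (Hcf : prod_cf_is (fun i => seg ltM (lam_ i)) Ds D L) :
  exists U : set (set M), is_ultrafilter U /\ uniform U /\ Ch_le U L.
Proof.
  destruct Hcf as [[F [HFin HFcof]] _].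
  destruct HD_gen as [G [HGin HGgen]].
  destruct HD_ultra as [HDf [HDne HDul]].
  destruct Hf as [Hfa Hfb].
  destruct HL as [HLc [HLnat HLcf]].
  destruct HLc as [[wfL [trL totL]] HLc'] eqn:HLcE.
  destruct HLnat as [eL HeL].
  set (a0 := eL 0).
  set (U := fun A : set M => exists a : L,
     D (fun i => subD (Ds i) (g i (f a i)) (fun y => A (proj1_sig y)))).
  assert (Ufull : U (fun _ => True)).
  { exists a0; apply (filt_T D HDf); intros i.
    unfold subD, ideal_of; apply (filt_T _ (HDs_filter i)).
    intros y [_ Hy]; apply Hy; auto. }
  assert (Uup : forall A B, U A -> (forall x, A x -> B x) -> U B).
  { intros A B [a Ha] HAB; exists a; apply (filt_up D HDf _ _ Ha).
    intros i Hi; apply (subD_mono _ _ _ _ (HDs_filter i) Hi); auto. }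
  assert (Ugen : forall (A B : set M) a b, ltL a b ->
      D (fun i => subD (Ds i) (g i (f a i)) (fun y => A (proj1_sig y))) ->
      D (fun i => subD (Ds i) (g i (f b i)) (fun y => B (proj1_sig y))) ->
      U (fun x => A x /\ B x)).
  { intros A B a b Hab HA HB; exists b.
    apply (filt_up D HDf _ _ (filt_and D HDf _ _ (Hfa a b Hab) (filt_and D HDf _ _ HA HB))).
    intros i [Hle [H1 H2]].
    apply (subD_and _ _ _ _ (HDs_filter i)); auto.
    apply (subD_trans _ _ _ _ (HDs_filter i) (proj1 (proj2 (Hg i)) _ _ Hle) H1). }
  assert (UF : is_ultrafilter U).
  { split; [split; [exact Ufull| split]| split].
    - intros A B HA HB; apply (Uup A B HA HB).
    - intros A B [a HA] [b HB].
      destruct (totL a b) as [X|[X|X]].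
      + apply (Ugen A B a b X HA HB).
      + subst b; exists a.
        apply (filt_up D HDf _ _ (filt_and D HDf _ _ HA HB)).
        intros i [H1 H2]; apply (subD_and _ _ _ _ (HDs_filter i)); auto.
      + apply (Uup (fun x => B x /\ A x)); [apply (Ugen B A b a X HB HA)|].
        intros x [? ?]; split; auto.
    - intros [a Ha]. apply HDne. apply (filt_up D HDf _ _ Ha).
      intros i Hi. apply (pos_not_empty _ _ (HDs_filter i) (proj1 (Hg i) _) Hi).
    - intros A.
      set (V := fun i (t : W i) => subD (Ds i) (g i t) (fun y => A (proj1_sig y)) \/
                  subD (Ds i) (g i t) (fun y => compl A (proj1_sig y))).
      assert (HV : forall i, dense (leW i) (V i)).
      { intros i s. destruct (proj2 (proj2 (Hg i)) s (fun y => A (proj1_sig y))) as [t [Ht1 Ht2]].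
        exists t; split; auto. }
      destruct (Hfb V HV) as [a Ha].
      destruct (HDul (fun i => subD (Ds i) (g i (f a i)) (fun y => A (proj1_sig y)))) as [H|H].
      + left; exists a; exact H.
      + right; exists a. apply (filt_up D HDf _ _ (filt_and D HDf _ _ Ha H)).
        intros i [[H1|H1] H2]; [contradiction|exact H1]. }
  exists U; split; [exact UF| split].
  -
    intros A [a Ha].
    destruct HM as [[wfM [trM totM]] HMc].
    apply (emb ltM wfM totM).
    intros x Hx.
    destruct (Hmu_union x) as [i Hi].
    set (X := fun i => subD (Ds i) (g i (f a i)) (fun y => A (proj1_sig y))).
    assert (Hunb : exists j, X j /\ (i = j \/ ltK i j)).
    { apply NNPP; intros Hn.
      destruct HK as [[wfK [trK totK]] HKc].
      apply (proj2 (HKc i)).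
      eapply cle_trans; [exact (HD_unif X Ha)|].
      exists (fun jj : elts X => exist (fun y => ltK y i) (proj1_sig jj)
        (match totK (proj1_sig jj) i with
         | or_introl H => H
         | or_intror H => False_ind _ (Hn (ex_intro _ (proj1_sig jj)
               (conj (proj2_sig jj) (match H with or_introl E => or_introl (eq_sym E)
                                      | or_intror E => or_intror E end)))) end)).
      intros u v E; apply sig_eq; inversion E; auto. }
    destruct Hunb as [j [Xj Hij]].
    assert (Hxj : ltM x (lam_ j)).
    { assert (Hmm : ltM x (mu_ j)).
      { destruct Hij as [E|E]; [subst; auto| eauto]. }
      destruct (Hmu_lam j) as [E|E]; [eauto| rewrite <- E; auto]. }
    assert (Hbig := pos_big _ _ _ (HDs_filter j) (HDs_cosmall j) (proj1 (Hg j) _) Xj).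
    assert (Hle1 : card_le (seg ltM (lam_ j)) (elts (fun y : seg ltM (lam_ j) => A (proj1_sig y)))).
    { apply NNPP; intros Hn; apply Hbig; split; auto.
      exists (fun y => proj1_sig y); intros u v E; apply sig_eq; auto. }
    destruct (Hlam_reg j) as [[_ Hc] _].
    apply (proj2 (Hc (exist _ x Hxj))).
    eapply cle_trans; [exact Hle1|].
    eapply cle_trans; [|eapply cle_trans; [exact Hx|]].
    + exists (fun u => exist A (proj1_sig (proj1_sig u)) (proj2_sig u)).
      intros u v E; inversion E; apply sig_eq, sig_eq; auto.
    + exists (fun q => exist (fun y => seg_lt ltM (lam_ j) y (exist _ x Hxj))
         (exist (fun z => ltM z (lam_ j)) (proj1_sig q) (trM _ _ _ (proj2_sig q) Hxj))
         (proj2_sig q)).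
      intros u v E; inversion E; apply sig_eq; auto.
  -
    assert (pL := card_sq L ltL HLc (ex_intro _ eL HeL)).
    assert (lL := list_inj L pL (ex_intro _ eL HeL)).
    assert (jL : card_le (L * L * list L) L).
    { eapply cle_trans; [apply cle_prod; [exact pL| exact lL]| exact pL]. }
    destruct jL as [jj Hjj].
    set (base := fun t : L * L * list L => fun x : M => exists i,
       (forall a, In a (snd t) -> G a i) /\ exists y : seg ltM (lam_ i),
         proj1_sig y = x /\ g i (f (fst (fst t)) i) y /\ F (snd (fst t)) i y).
    set (A := fun c : L => fun x : M => (exists t, jj t = c /\ base t x) \/ ~ (exists t, jj t = c)).
    assert (Gl : forall l, D (fun i => forall a, In a l -> G a i)).
    { induction l as [|b l IHl].
      - apply (filt_T D HDf); intros i a [].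
      - apply (filt_up D HDf _ _ (filt_and D HDf _ _ (HGin b) IHl)).
        intros i [H1 H2] a [E|E]; [subst; auto| auto]. }
    assert (base_in : forall t, U (base t)).
    { intros t; exists (fst (fst t)).
      apply (filt_up D HDf _ _ (Gl (snd t))). intros i Hi.
      unfold subD, ideal_of. apply (filt_up _ (HDs_filter i) _ _ (HFin (snd (fst t)) i)).
      intros y Hy [H1 H2]; apply H2. exists i; split; auto. exists y; auto. }
    exists A; split.
    + intros c. destruct (classic (exists t, jj t = c)) as [[t Ht]|Hn].
      * apply (Uup (base t)); auto. intros x Hx; left; exists t; auto.
      * apply (Uup (fun _ => True)); auto. intros x _; right; auto.
    + intros B [a Ha].
      set (X := fun i => subD (Ds i) (g i (f a i)) (fun y => B (proj1_sig y))).
      set (C := fun i (y : seg ltM (lam_ i)) => X i -> ~ (g i (f a i) y /\ ~ B (proj1_sig y))).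
      assert (HC : forall i, Ds i (C i)).
      { intros i; destruct (classic (X i)) as [Xi|Xi].
        - apply (filt_up _ (HDs_filter i) _ _ Xi). intros y Hy _; exact Hy.
        - apply (filt_T _ (HDs_filter i)); intros y HX; contradiction. }
      destruct (HFcof C HC) as [b Hb].
      destruct (HGgen _ (filt_and D HDf _ _ Ha Hb)) as [l Hl].
      exists (jj (a, b, l)). split.
      * exists (fun u => proj1_sig u); intros u v E; apply sig_eq; auto.
      * intros [h _].
        destruct HMinf as [eM _]; destruct (h (eM 0)) as [x [HAx HnB]].
        destruct HAx as [[t [Et Hbt]]|Hn].
        -- apply Hjj in Et; subst t.
           destruct Hbt as [i [Hil [y [Ey [Hgy HFy]]]]]; simpl in *.
           destruct (Hl i Hil) as [Xi Yi].
           apply HnB; rewrite <- Ey. apply NNPP; intros Hnb.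
           exact (Yi y HFy Xi (conj Hgy Hnb)).
        -- apply Hn; exists (a, b, l); auto.
Qed.
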